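(* Let $S$ be a $\tau$-mutation system over $\mathcal{A}=\{a_0,\dots,a_{d-1}\}$ with starting word $w$ of length $m$, fix $k\in\mathbb{N}$ with $m\ge k$, and let $\mathbf{M}^{(k)}$ be the $k$-substitution matrix. Then for every $n\in\mathbb{N}$, \[\mathbb{E}\big[\mathbf{fr}^{(k)}_{S(n)}\big]=\frac{\mathbb{E}\big[\mathbf{ct}^{(k)}_{S(n)}\big]}{m+n(\tau-1)}=\frac{1}{m+n(\tau-1)}\prod_{j=0}^{n-1}\frac{1}{m+j(\tau-1)}\Big(\mathbf{M}^{(k)}+(m+j(\tau-1)-k)\mathbf{I}\Big)\mathbf{ct}^{(k)}_w .\]
   Context: Let $\mathcal{A}=\{a_0,\dots,a_{d-1}\}$ be a finite alphabet and $\mathcal{A}^\star$ the set of finite nonempty words. A mutation law assigns to each $a_t$ a finitely supported probability distribution $\mathbb{P}_{a_t}$ on $\mathcal{A}^\star$; $\vartheta(a_t)$ is a random word with law $\mathbb{P}_{a_t}$; it is a $\tau$-mutation law if every $\mathbb{P}_{a_t}$ is supported on $\mathcal{A}^\tau$. A mutation step on $w=w_0\cdots w_{m-1}$ picks $i$ uniformly in $\{0,\dots,m-1\}$ and replaces $w_i$ by an independent sample of $\vartheta(w_i)$. A mutation system: $S(0)=w$, $S(n)=\vartheta(S(n-1))$ with independent randomness at each step. $\mathrm{ct}_v(u)$ is the number of $i\in\{0,\dots,|v|-1\}$ with $v_i\cdots v_{i+|u|-1}=u$ (indices cyclic mod $|v|$); $\mathbf{ct}^{(k)}_v=(\mathrm{ct}_v(u))_{u\in\mathcal{A}^k}$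 in lexicographic order, $\mathbf{fr}^{(k)}_v=\mathbf{ct}^{(k)}_v/|v|$. The $k$-substitution matrix $\mathbf{M}^{(k)}$ is the $d^k\times d^k$ matrix with \[\mathbf{M}^{(k)}_{u,v}=\sum_{l\ge1}\sum_{\eta\in\mathcal{A}^l}\sum_{t\in[d]}\Pr(\vartheta(a_t)=\eta)\Big(\sum_{j=1}^{k-1}\mathbb{1}[v_j=a_t]\,\mathbb{1}\big[(v_0\cdots v_{j-1}\eta v_{j+1}\cdots v_{k-1})_{[k]}=u\big]+\sum_{j=0}^{l-1}\mathbb{1}[v_0=a_t]\,\mathbb{1}\big[(\eta v_1\cdots v_{k-1})_{j+[k]}=u\big]\Big),\] where $x_{j+[k]}=x_j\cdots x_{j+k-1}$ and $x_{[k]}$ is the first $k$ symbols of $x$. *)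

(* Defs.v *)
From mathcomp Require Import all_boot all_order all_algebra.
Import Order.TTheory GRing.Theory Num.Theory.
Local Open Scope ring_scope.

Section Mutation.
Variables (R : realFieldType) (d tau : nat).

(* The alphabet is 'I_d (letter a_t is t); words are seq 'I_d. *)
Definition word := seq 'I_d.

Definition mutation_law (P : 'I_d -> {ffun tau.-tuple 'I_d -> R}) : Prop :=
  (forall t eta, 0 <= P t eta) /\ (forall t, \sum_(eta : tau.-tuple 'I_d) P t eta = 1).

Definition letter (v : word) (i : nat) : option 'I_d := nth None (map Some v) i.

Definition replace (v : word) (i : nat) (eta : word) : word :=
  take i v ++ eta ++ drop i.+1 v.

(* Law of S(n): a finite list of (probability, outcome) pairs. One mutation
   step picks i uniformly in {0..|v|-1} and replaces v_i by a sample of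
   theta(v_i). *)
Fixpoint law (P : 'I_d -> {ffun tau.-tuple 'I_d -> R}) (w : word) (n : nat)
  : seq (R * word) :=
  match n with
  | 0 => [:: (1, w)]
  | n'.+1 =>
    flatten [seq flatten [seq [seq (pv.1 / (size pv.2)%:R
                                      * P (tnth (in_tuple pv.2) i) eta,
                                    replace pv.2 i (val eta))
                              | eta <- enum {: tau.-tuple 'I_d}]
                          | i <- enum 'I_(size pv.2)]
            | pv <- law P w n']
  end.

Definition expect P w n (f : word -> R) : R :=
  \sum_(pv <- law P w n) pv.1 * f pv.2.

Definition ct (k : nat) (v : word) (u : k.-tuple 'I_d) : nat :=
  #|[set i : 'I_(size v) |
      [forall j : 'I_k, letter v ((i + j) %% size v) == Some (tnth u j)]]|.

Definition fr (k : nat) (v : word) (u : k.-tuple 'I_d) : R :=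
  (ct k v u)%:R / (size v)%:R.

Definition subst_matrix (P : 'I_d -> {ffun tau.-tuple 'I_d -> R}) (k : nat)
  (u v : k.-tuple 'I_d) : R :=
  \sum_(t < d) \sum_(eta : tau.-tuple 'I_d) P t eta *
    ( \sum_(1 <= j < k)
        ((letter v j == Some t) &&
         (take k (replace v j eta) == val u) : nat)%:R
    + \sum_(0 <= j < tau)
        ((letter v 0 == Some t) &&
         (take k (drop j (val eta ++ behead v)) == val u) : nat)%:R ).

(* x_n := prod_{j=0}^{n-1} (1/(m+j(tau-1))) (M^(k) + (m+j(tau-1)-k) I) ct_w,
   the factors being applied with j = 0 first (they commute). *)
Fixpoint rhs_vec (P : 'I_d -> {ffun tau.-tuple 'I_d -> R}) (k : nat) (w : word)
  (n : nat) : k.-tuple 'I_d -> R :=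
  match n with
  | 0 => fun u => (ct k w u)%:R
  | j.+1 => fun u =>
      let L := (size w + j * (tau - 1))%:R in
      L^-1 * (\sum_(v : k.-tuple 'I_d) subst_matrix P k u v * rhs_vec P k w j v
              + (L - k%:R) * rhs_vec P k w j u)
  end.

End Mutation.

Arguments word {d}.
Arguments mutation_law {R d tau}.
Arguments letter {d}.
Arguments replace {d}.
Arguments law {R d tau}.
Arguments expect {R d tau}.
Arguments ct {d k}.
Arguments fr {R d k}.
Arguments subst_matrix {R d tau} P {k}.
Arguments rhs_vec {R d tau} P k.

(* Main.v *)
Require Import Defs.
From mathcomp Require Import all_boot all_order all_algebra zify.
Import GRing.Theory Num.Theory.
Local Open Scope ring_scope.

Section Comb.
Variables (d k : nat) (x0 : 'I_d).

Definition twin (x : seq 'I_d) (p : nat) : k.-tuple 'I_d :=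
  [tuple nth x0 x ((p + j) %% size x) | j < k].

Lemma letter_nth (x : seq 'I_d) i : (i < size x)%N -> letter x i = Some (nth x0 x i).
Proof. by move=> H; rewrite /letter (nth_map x0). Qed.

Lemma nth_twin x p m : (m < k)%N -> nth x0 (twin x p) m = nth x0 x ((p + m) %% size x).
Proof.
move=> H; have := tnth_nth x0 (twin x p) (Ordinal H).
by rewrite tnth_mktuple /= => <-.
Qed.

Lemma twin_mod x p : twin x (p %% size x) = twin x p.
Proof. by apply: eq_from_tnth => j; rewrite !tnth_mktuple modnDml. Qed.

Lemma ct_sum (R : realFieldType) (x : seq 'I_d) (u : k.-tuple 'I_d) : (0 < size x)%N ->
  (ct x u)%:R = \sum_(p < size x) ((twin x p == u) : nat)%:R :> R.
Proof.
move=> Hx; rewrite /ct -sum1_card natr_sum big_mkcond /=.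
apply: eq_bigr => i _; rewrite inE.
have -> : [forall j : 'I_k, letter x ((i + j) %% size x) == Some (tnth u j)] = (twin x i == u).
  rewrite eqEtuple; apply: eq_forallb => j.
  by rewrite tnth_mktuple letter_nth ?ltn_pmod.
by case: (twin x i == u).
Qed.

Lemma sum_shift (R : realFieldType) (L c : nat) (f : nat -> R) :
  (forall p, f (p %% L)%N = f p) -> \sum_(p < L) f (c + p)%N = \sum_(p < L) f p.
Proof.
move=> Hf; elim: c => [|c IH]; first by apply: eq_bigr => p.
rewrite -IH; case: L Hf {IH} => [|L] Hf; first by rewrite !big_ord0.
rewrite big_ord_recr big_ord_recl /=; rewrite addrC; congr (_ + _).
  by rewrite -(Hf (c.+1 + L)%N) -(Hf (c + 0)%N) addn0 addSnnS modnDr.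
by apply: eq_bigr => i _; rewrite /bump /= add1n addSnnS.
Qed.

Lemma nth_rot (x : seq 'I_d) i m : (i <= size x)%N -> (m < size x)%N ->
  nth x0 (rot i x) m = nth x0 x ((m + i) %% size x).
Proof.
move=> Hi Hm; rewrite /rot nth_cat size_drop.
case: ifP => H.
  rewrite nth_drop modn_small; last lia. congr (nth _ _ _); lia.
rewrite nth_take; last lia.
have -> : (m + i = (m + i - size x) + size x)%N by lia.
rewrite modnDr modn_small; last lia. congr (nth _ _ _); lia.
Qed.

Lemma twin_rot x i p : (i <= size x)%N -> twin (rot i x) p = twin x (i + p).
Proof.
move=> Hi; apply: eq_from_tnth => j; rewrite !tnth_mktuple size_rot.
case: (posnP (size x)) => Hx.
  by move: Hx; case: x {Hi} => //= _; rewrite !nth_default ?size_rot.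
rewrite nth_rot ?ltn_pmod //; congr (nth _ _ _).
rewrite modnDml; congr (_ %% _)%N; lia.
Qed.

Lemma ct_rot (R : realFieldType) x i (u : k.-tuple 'I_d) : (i <= size x)%N -> (0 < size x)%N ->
  (ct (rot i x) u)%:R = (ct x u)%:R :> R.
Proof.
move=> Hi Hx; rewrite !ct_sum ?size_rot //.
under eq_bigr do rewrite twin_rot //.
rewrite (@sum_shift R _ i (fun p => ((twin x p == u) : nat)%:R)) //.
by move=> p; rewrite twin_mod.
Qed.


Lemma size_y (x eta : seq 'I_d) : size (eta ++ behead x) = (size eta + (size x).-1)%N.
Proof. by rewrite size_cat size_behead. Qed.

Lemma modn_wrap a N : (N <= a)%N -> (a < N + N)%N -> (a %% N = a - N)%N.
Proof.
move=> H1 H2; have -> : (a = (a - N) + N)%N by lia.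
rewrite modnDr modn_small; lia.
Qed.

Lemma ptA (x eta : seq 'I_d) q : (0 < k)%N -> (k <= size x)%N -> (q < size eta)%N ->
  val (twin (eta ++ behead x) q) = take k (drop q (eta ++ behead (twin x 0))).
Proof.
move=> Hk Hkx Hq; apply: (eq_from_nth (x0:=x0)).
  rewrite size_tuple size_take size_drop size_cat size_behead size_tuple.
  case: ifP => //; lia.
move=> m; rewrite size_tuple => Hm.
rewrite nth_twin // nth_take // nth_drop size_y modn_small; last lia.
rewrite !nth_cat; case: ifP => // H.
rewrite !nth_behead nth_twin; last lia.
rewrite modn_small; last lia.
congr (nth _ _ _); lia.
Qed.

Lemma ptB (x eta : seq 'I_d) r : (0 < k)%N -> (k <= size x)%N -> (0 < size eta)%N ->
  (r < size x - k)%N -> twin (eta ++ behead x) (size eta + r) = twin x r.+1.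
Proof.
move=> Hk Hkx Ht Hr; apply: eq_from_tnth => j; rewrite !tnth_mktuple size_y.
have Hj := ltn_ord j.
rewrite !modn_small; try lia.
rewrite nth_cat ifF; last lia.
rewrite nth_behead; congr (nth _ _ _); lia.
Qed.

Lemma ptC (x eta : seq 'I_d) j : (0 < k)%N -> (k <= size x)%N -> (0 < size eta)%N ->
  (1 <= j < k)%N ->
  val (twin (eta ++ behead x) (size eta + size x - j - 1))
  = take k (replace (twin x (size x - j)) j eta).
Proof.
move=> Hk Hkx Ht /andP[Hj1 Hj2]; apply: (eq_from_nth (x0:=x0)).
  rewrite size_tuple size_take /replace !size_cat size_take size_drop !size_tuple.
  rewrite Hj2; case: ifP => //; lia.
move=> m; rewrite size_tuple => Hm.
rewrite nth_twin // nth_take // size_y /replace.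
case: (ltnP m j) => Hmj.
  rewrite modn_small; last lia.
  rewrite [RHS]nth_cat size_take size_tuple Hj2 ifT; last lia.
  rewrite nth_take // nth_twin // modn_small; last lia.
  rewrite nth_cat ifF; last lia.
  rewrite nth_behead; congr (nth _ _ _); lia.
rewrite modn_wrap; try lia.
rewrite [RHS]nth_cat size_take size_tuple Hj2 ifF; last lia.
rewrite [RHS]nth_cat; case: ifP => H1.
  rewrite nth_cat ifT; last lia.
  congr (nth _ _ _); lia.
rewrite nth_cat ifF; last lia.
rewrite nth_drop nth_twin; last lia.
rewrite nth_behead.
have -> : (size x - j + (j.+1 + (m - j - size eta)) = (m + 1 - size eta - j) + size x)%N by lia.
rewrite modnDr modn_small; last lia.
congr (nth _ _ _); lia.
Qed.

Lemma sum_shift_nat (R : realFieldType) a n (F : nat -> R) :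
  \sum_(a <= i < a + n) F i = \sum_(i < n) F (a + i)%N.
Proof.
rewrite -{1}[a]add0n big_addn addKn big_mkord; apply: eq_bigr => i _; by rewrite addnC.
Qed.

Lemma decomp (R : realFieldType) (x eta : seq 'I_d) (u : k.-tuple 'I_d) :
  (0 < k)%N -> (k <= size x)%N -> (0 < size eta)%N ->
  (ct (eta ++ behead x) u)%:R =
    \sum_(r < size x - k) ((twin x r.+1 == u) : nat)%:R
  + \sum_(1 <= j < k) ((take k (replace (twin x (size x - j)) j eta) == val u) : nat)%:R
  + \sum_(q < size eta) ((take k (drop q (eta ++ behead (twin x 0))) == val u) : nat)%:R :> R.
Proof.
move=> Hk Hkx Ht.
rewrite ct_sum; last by rewrite size_y; lia.
rewrite -(big_mkord xpredT (fun p => ((twin (eta ++ behead x) p == u) : nat)%:R)) size_y.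
rewrite (@big_cat_nat _ _ _ (size eta)) //=; last lia.
rewrite [RHS]addrC; congr (_ + _).
  rewrite big_mkord; apply: eq_bigr => q _.
  by rewrite -ptA // val_eqE.
rewrite sum_shift_nat.
have -> : ((size x).-1 = (size x - k) + (k - 1))%N by lia.
rewrite big_split_ord /=; congr (_ + _).
  apply: eq_bigr => r _; rewrite ptB //.
rewrite (big_addn 0 k 1) big_mkord.
idtac.
rewrite (reindex_inj rev_ord_inj) /=.
apply: eq_bigr => i _.
have Hi := ltn_ord i.
rewrite -ptC; last by apply/andP; split; lia.
  rewrite val_eqE; have -> : (size eta + (size x - k + (k - 1 - i.+1)) = size eta + size x - (i + 1) - 1)%N by lia. by [].
all: lia.
Qed.

End Comb.

Section Step.
Variables (R : realFieldType) (d tau k : nat) (x0 : 'I_d).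
Variable (P : 'I_d -> {ffun tau.-tuple 'I_d -> R}).

Lemma sum_letter (a : 'I_d) (G : 'I_d -> R) (c : bool) :
  \sum_(t < d) G t * (((Some a == Some t) && c) : nat)%:R = G a * (c : nat)%:R.
Proof.
rewrite (bigD1 a) //= eqxx big1 ?addr0 // => t Hne.
have -> : (Some a == Some t) = false by apply/eqP => -[] E; move: Hne; rewrite E eqxx.
by rewrite /= mulr0.
Qed.

Lemma subst_eq (u v : k.-tuple 'I_d) : (0 < k)%N ->
  subst_matrix P u v =
    \sum_(1 <= j < k) \sum_(eta : tau.-tuple 'I_d)
        P (nth x0 v j) eta * ((take k (replace v j eta) == val u) : nat)%:R
  + \sum_(eta : tau.-tuple 'I_d) P (nth x0 v 0) eta *
        \sum_(q < tau) ((take k (drop q (val eta ++ behead v)) == val u) : nat)%:R.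
Proof.
move=> Hk; rewrite /subst_matrix.
under eq_bigr => t _ do under eq_bigr => eta _ do rewrite mulrDr !mulr_sumr.
under eq_bigr => t _ do rewrite big_split.
rewrite big_split; congr (_ + _).
  rewrite exchange_big /=.
  under eq_bigr do rewrite exchange_big /=.
  rewrite exchange_big /=.
  apply: eq_big_nat => j /andP[Hj1 Hj2].
  apply: eq_bigr => eta _.
  rewrite (@letter_nth _ x0) ?size_tuple //.
  exact: (sum_letter (nth x0 v j) (fun t => P t eta)).
rewrite exchange_big /=; apply: eq_bigr => eta _.
rewrite exchange_big /= big_mkord mulr_sumr; apply: eq_bigr => q _.
rewrite (@letter_nth _ x0) ?size_tuple //.
exact: (sum_letter (nth x0 v 0) (fun t => P t eta)).
Qed.


Lemma rot_replace (x eta : seq 'I_d) i : (i < size x)%N ->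
  rot i (replace x i eta) = eta ++ behead (rot i x).
Proof.
move=> Hi; rewrite /replace.
have Hs : size (take i x) = i by rewrite size_takel // ltnW.
rewrite -{1}Hs rot_size_cat /rot -catA [in RHS](drop_nth x0) //.
Qed.

Notation tw := (@twin d k x0).

Lemma step (x : seq 'I_d) (u : k.-tuple 'I_d) :
  (0 < k)%N -> (k <= size x)%N -> (0 < tau)%N ->
  (forall t, \sum_(eta : tau.-tuple 'I_d) P t eta = 1) ->
  \sum_(i < size x) \sum_(eta : tau.-tuple 'I_d)
      P (nth x0 x i) eta * (ct (replace x i eta) u)%:R
  = (size x - k)%:R * (ct x u)%:R
    + \sum_(v : k.-tuple 'I_d) subst_matrix P u v * (ct x v)%:R.
Proof.
move=> Hk Hkx Ht Hsum.
have Hx : (0 < size x)%N by lia.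
have E : forall (i : 'I_(size x)) (eta : tau.-tuple 'I_d),
  (ct (replace x i eta) u)%:R =
    \sum_(r < size x - k) ((tw x (i + r.+1) == u) : nat)%:R
  + \sum_(1 <= j < k) ((take k (replace (tw x (i + (size x - j))) j eta) == val u) : nat)%:R
  + \sum_(q < tau) ((take k (drop q (val eta ++ behead (tw x i))) == val u) : nat)%:R :> R.
  move=> i eta.
  have Hi := ltn_ord i.
  have Hsr : size (replace x i eta) = (size x + tau - 1)%N.
    rewrite /replace !size_cat size_takel ?size_drop ?size_tuple; lia.
  rewrite -(@ct_rot d k x0 R (replace x i eta) i); last 2 first.
    by rewrite Hsr; lia.
    by rewrite Hsr; lia.
  rewrite rot_replace // (@decomp d k x0 R) ?size_rot ?size_tuple //.
  rewrite !twin_rot ?size_rot ?addn0; try lia.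
  congr (_ + _ + _).
  by apply: eq_bigr => r _; rewrite twin_rot // ltnW.
  by apply: eq_bigr => r _; rewrite twin_rot // ltnW.
under eq_bigr do under eq_bigr do rewrite E !mulrDr.
under eq_bigr do rewrite !big_split.
rewrite !big_split /=.
have E2 : \sum_(v : k.-tuple 'I_d) subst_matrix P u v * (ct x v)%:R
   = \sum_(p < size x) subst_matrix P u (tw x p).
  under eq_bigr do rewrite (@ct_sum d k x0 R x) // mulr_sumr.
  rewrite exchange_big /=; apply: eq_bigr => p _.
  rewrite (bigD1 (tw x p)) //= eqxx mulr1 big1 ?addr0 // => v Hv.
  by rewrite eq_sym (negbTE Hv) mulr0.
rewrite E2.
rewrite (eq_bigr _ (fun (p : 'I_(size x)) _ => subst_eq u (tw x p) Hk)).
rewrite big_split.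
rewrite -addrA; congr (_ + _); last congr (_ + _).
-
  under eq_bigr do rewrite -mulr_suml Hsum mul1r.
  rewrite exchange_big.
  under eq_bigr => r _ do under eq_bigr => i _ do rewrite addnC.
  have Hper : forall p, (fun p => ((tw x p == u) : nat)%:R) (p %% size x)%N
                       = (fun p => ((tw x p == u) : nat)%:R) p :> R.
    by move=> p /=; rewrite twin_mod.
  under eq_bigr => r _ do rewrite (@sum_shift R (size x) r.+1 _ Hper).
  by rewrite -(@ct_sum d k x0 R x u Hx) sumr_const card_ord mulr_natl.
- under eq_bigr do under eq_bigr do rewrite mulr_sumr.
  under eq_bigr do rewrite exchange_big.
  rewrite exchange_big [RHS]exchange_big.
  apply: eq_big_nat => j /andP[Hj1 Hj2].
  pose F := fun p => \sum_(eta : tau.-tuple 'I_d) P (nth x0 (tw x p) j) eta *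
             ((take k (replace (tw x p) j eta) == val u) : nat)%:R.
  have Hper : forall p, F (p %% size x)%N = F p by move=> p; rewrite /F twin_mod.
  rewrite -[RHS](@sum_shift R (size x) (size x - j) F Hper).
  apply: eq_bigr => i _; apply: eq_bigr => eta _.
  rewrite (@nth_twin d k x0) // addnC.
  have -> : (size x - j + i + j = i + size x)%N by lia.
  by rewrite modnDr modn_small.
- apply: eq_bigr => i _; apply: eq_bigr => eta _.
  by rewrite (@nth_twin d k x0) // addn0 modn_small.
Qed.

End Step.
Section Main.
Variables (R : realFieldType) (d tau : nat) (P : 'I_d -> {ffun tau.-tuple 'I_d -> R}).

Lemma expect_step w n f :
  expect P w n.+1 f = \sum_(pv <- law P w n) pv.1 / (size pv.2)%:R *
     \sum_(i < size pv.2) \sum_(eta : tau.-tuple 'I_d)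
        P (tnth (in_tuple pv.2) i) eta * f (replace pv.2 i eta).
Proof.
rewrite /expect /= big_flatten /= big_map; apply: eq_bigr => pv _.
rewrite big_flatten /= big_map mulr_sumr big_enum /=.
apply: eq_bigr => i _.
rewrite big_map big_enum /= mulr_sumr; apply: eq_bigr => eta _.
by rewrite mulrA.
Qed.

Lemma law_size w n : (0 < tau)%N -> forall pv, pv \in law P w n ->
  size pv.2 = (size w + n * (tau - 1))%N.
Proof.
move=> Ht; elim: n => [|n IH] pv /=.
  by rewrite inE => /eqP -> /=; rewrite mul0n addn0.
move=> /flatten_mapP [pv' Hpv' /flatten_mapP [i _ /mapP [eta _ ->]]] /=.
have Hs := IH _ Hpv'; have Hi := ltn_ord i.
rewrite /replace !size_cat size_takel ?size_drop ?size_tuple ?mulSn; last exact: ltnW.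
move: Hi; move: (nat_of_ord i) => m Hm.
rewrite Hs in Hm *; move: Ht Hm; generalize (n * (tau - 1))%N => N; lia.
Qed.

Lemma E_ct w k : (0 < tau)%N -> (forall t, \sum_(eta : tau.-tuple 'I_d) P t eta = 1) ->
  (0 < k)%N -> (k <= size w)%N ->
  forall n (u : k.-tuple 'I_d),
  expect P w n (fun v => (ct v u)%:R) = rhs_vec P k w n u.
Proof.
move=> Ht Hsum Hk Hkw n; elim: n => [|n IH] u.
  by rewrite /expect /= big_cons big_nil addr0 mul1r.
rewrite expect_step /=.
set Ln := (size w + n * (tau - 1))%N.
have H1 : forall pv, pv \in law P w n ->
  pv.1 / (size pv.2)%:R * (\sum_(i < size pv.2) \sum_(eta : tau.-tuple 'I_d)
        P (tnth (in_tuple pv.2) i) eta * (ct (replace pv.2 i eta) u)%:R)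
  = Ln%:R^-1 * ((Ln%:R - k%:R) * (pv.1 * (ct pv.2 u)%:R)
      + \sum_(v : k.-tuple 'I_d) subst_matrix P u v * (pv.1 * (ct pv.2 v)%:R)).
  move=> pv Hpv; have Hs := law_size _ _ Ht _ Hpv.
  move: Hs; case: pv Hpv => p x /= _ Hs.
  case: x Hs => [|x0 s] Hs.
    move: Hs => /= Hs; have : (size w <= 0)%N by rewrite Hs leq_addr.
    lia.
  under eq_bigr do under eq_bigr do rewrite (tnth_nth x0).
  have Hks : (k <= size (x0 :: s))%N by rewrite Hs (leq_trans Hkw (leq_addr _ _)).
  rewrite (@step R d tau k x0 P) //.
  rewrite /Ln -Hs natrB //.
  rewrite [p / _]mulrC -mulrA; congr (_ * _).
  rewrite !mulrDr mulr_sumr; congr (_ + _); first by rewrite mulrCA.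
  by apply: eq_bigr => v _; rewrite mulrCA.
rewrite big_seq (eq_bigr _ H1) -big_seq -mulr_sumr big_split /= addrC.
rewrite -mulr_sumr exchange_big /=.
congr (_ * (_ + _)).
  apply: eq_bigr => v _; rewrite -mulr_sumr -IH //.
by rewrite -IH.
Qed.

End Main.

Theorem mainTheorem6 (R : realFieldType) (d tau : nat)
  (P : 'I_d -> {ffun tau.-tuple 'I_d -> R}) (w : seq 'I_d) (k : nat) :
  (0 < tau)%N -> mutation_law P -> (0 < k)%N -> (k <= size w)%N ->
  forall (n : nat) (u : k.-tuple 'I_d),
    let L := (size w + n * (tau - 1))%:R in
    expect P w n (fun v => fr v u) = expect P w n (fun v => (ct v u)%:R) / L /\
    expect P w n (fun v => (ct v u)%:R) / L = L^-1 * rhs_vec P k w n u.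
Proof.
move=> Ht [Hpos Hsum] Hk Hkw n u L; split.
  rewrite /expect big_seq mulr_suml [RHS]big_seq.
  apply: eq_bigr => pv Hpv.
  by rewrite /fr (@law_size _ _ _ P _ _ Ht _ Hpv) mulrA.
by rewrite (@E_ct _ _ _ P _ _ Ht Hsum Hk Hkw) mulrC.
Qed.
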